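(* For every $m\ge 0$, $p_m(x)=p_0(x)\,q_m(x)$. Moreover $p_m$ is the characteristic polynomial of $J_m$, so $\mathrm{Spec}(J_m)$ consists of $\mathrm{Spec}(J_0)$ together with the zeros of $q_m$.
   Context: Let $k\ge 2$, $a_0,\dots,a_{k-1}\in\mathbb{R}$, $a_0\ne0$. Define $b_{0,j}=a_j$ ($0\le j\le k-1$) and for $m\ge0$: $b_{m+1,j}=a_jb_{m,0}+b_{m,j+1}$ ($0\le j\le k-2$), $b_{m+1,k-1}=a_{k-1}b_{m,0}$. These are the coefficients of the $m$-times expanded linear equation $z_{n+1}=\sum_{j=0}^{k-1}b_{m,j}z_{n-m-j}$ of $x_{n+1}=\sum_{j=0}^{k-1}a_jx_{n-j}$. Define the polynomials $$p_m(x)=x^{k+m}-\sum_{j=0}^{k-1}b_{m,j}x^{k-j-1},\qquad q_m(x)=x^m+\sum_{i=0}^{m-1}b_{i,0}x^{m-i-1},$$ with $q_0\equiv1$. $J_m$ is the $(m+k)\times(m+k)$ matrix whose first row is $(0,\dots,0,b_{m,0},b_{m,1},\dots,b_{m,k-1})$ (with $m$ leading zeros), with ones at positions $(i+1,i)$ for $i=1,\dots,m+k-1$ and zeros elsewhere (the Jacobian of the $m$-th expanded equation). *)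

(* Defs.v *)
From HB Require Import structures.
From mathcomp Require Import all_boot all_order all_algebra.
From mathcomp Require Import complex.
Set Implicit Arguments. Unset Strict Implicit. Unset Printing Implicit Defensive.
Import Order.TTheory GRing.Theory Num.Theory.
Local Open Scope ring_scope.

(* Coefficients a_0..a_{k-1} are given as a : nat -> R; only the values
   a j with j < k are ever used. b k a m j = b_{m,j} for j < k, and 0 for j >= k. *)
Fixpoint bcoef (R : nzRingType) (k : nat) (a : nat -> R) (m j : nat) : R :=
  match m with
  | 0 => if (j < k)%N then a j else 0
  | m'.+1 => if (j < k)%N then a j * bcoef k a m' 0 + bcoef k a m' j.+1 else 0
  end.

Definition pm (R : nzRingType) (k : nat) (a : nat -> R) (m : nat) : {poly R} :=
  'X^(k + m) - \sum_(j < k) bcoef k a m j *: 'X^(k - j - 1).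

Definition qm (R : nzRingType) (k : nat) (a : nat -> R) (m : nat) : {poly R} :=
  'X^m + \sum_(i < m) bcoef k a i 0 *: 'X^(m - i - 1).

Definition Jm (R : nzRingType) (k : nat) (a : nat -> R) (m : nat) : 'M[R]_(m + k) :=
  \matrix_(i < m + k, j < m + k)
    if (i == 0%N :> nat) then (if (m <= j)%N then bcoef k a m (j - m) else 0)
    else (if (i == j.+1 :> nat) then 1 else 0).

(* Main.v *)
Require Import Defs.
From HB Require Import structures.
From mathcomp Require Import all_boot all_order all_algebra.
From mathcomp Require Import complex.
From mathcomp Require Import zify ring.
Set Implicit Arguments. Unset Strict Implicit. Unset Printing Implicit Defensive.
Import Order.TTheory GRing.Theory Num.Theory.
Local Open Scope ring_scope.

Definition Cmx (R : nzRingType) (c : nat -> R) n : 'M[R]_n :=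
  \matrix_(i < n, j < n) if (i == 0%N :> nat) then c (j : nat) else (if (i == j.+1 :> nat) then 1 else 0).

Lemma charC_rec (R : comNzRingType) (c : nat -> R) n :
  char_poly (Cmx c n.+1) = 'X * char_poly (Cmx c n) - (c n)%:P.
Proof.
rewrite /char_poly (expand_det_col _ ord_max).
case: n => [|n].
  rewrite big_ord1 /cofactor det_mx00 !mxE /= det_mx00.
  by rewrite expr0 !mulr1.
rewrite big_ord_recl big_ord_recr /= big1; last first.
  move=> i _; rewrite !mxE -val_eqE /= /bump /= !add1n eqSS.
  have h1 : (i == n :> nat) = false by rewrite ltn_eqF.
  have h2 : (i.+1 == n.+2) = false by rewrite ltn_eqF // ltnS leqW.
  by rewrite h1 h2 subrr mul0r.
rewrite add0r !mxE /=.
have -> : lift ord0 (ord_max : 'I_n.+1) = ord_max :> 'I_n.+2 by apply/val_inj.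
rewrite eqxx /bump /= add1n ltn_eqF // mulr0n sub0r subr0 mulr1n addrC.
congr (_ + _).
  rewrite /cofactor /= -signr_odd oddD addbb mul1r.
  apply: (congr1 (fun M => 'X * \det M)).
  apply/matrixP => i j; rewrite !mxE (inj_eq (@lift_inj _ ord_max)).
  have L (x : 'I_n.+1) : (lift (ord_max : 'I_n.+2) x : nat) = x.
    by rewrite /= /bump leqNgt ltn_ord.
  by rewrite !L.
rewrite /cofactor /= add0n.
have L (x : 'I_n.+1) : (lift (ord_max : 'I_n.+2) x : nat) = x.
  by rewrite /= /bump leqNgt ltn_ord.
have L0 (x : 'I_n.+1) : (lift (ord0 : 'I_n.+2) x : nat) = x.+1 by [].
have B (x : 'I_n.+1) : bump n.+1 x = x by rewrite /bump leqNgt ltn_ord.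
have B0 (x : nat) : bump 0 x = x.+1 by [].
rewrite -det_tr det_trig; last first.
  apply/is_trig_mxP => i j lt_ij; rewrite !mxE -val_eqE /= ?B ?B0 ?L ?L0.
  rewrite !gtn_eqF ?subrr // ltnS ltnW //.
rewrite (eq_bigr (fun _ => -1)); last first.
  move=> i _; rewrite !mxE -val_eqE /= ?B ?B0 ?L ?L0.
  by rewrite eqxx gtn_eqF // mulr0n sub0r.
rewrite prodr_const card_ord -exprD addnn -signr_odd odd_double expr0.
by rewrite !mulr1.
Qed.

Lemma charC (R : comNzRingType) (c : nat -> R) n :
  char_poly (Cmx c n) = 'X^n - \sum_(j < n) c j *: 'X^(n - 1 - j).
Proof.
elim: n => [|n IH].
  by rewrite /char_poly det_mx00 big_ord0 subr0 expr0.
rewrite charC_rec IH big_ord_recr /= mulrBr -exprS mulr_sumr opprD addrA.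
congr (_ - _ - _); last first.
  have -> : (n.+1 - 1 - n = 0)%N by rewrite subn1 /= subnn.
  by rewrite expr0 alg_polyC.
apply: eq_bigr => j _; rewrite -scalerAr -exprS; congr (_ *: 'X^_).
have := ltn_ord j; rewrite subn1 /= subn1 => h.
by move: h; clear; lia.
Qed.

Lemma Jm_Cmx (R : comNzRingType) k (a : nat -> R) m :
  Jm k a m = Cmx (fun j => if (m <= j)%N then bcoef k a m (j - m) else 0) (m + k).
Proof. by apply/matrixP => i j; rewrite !mxE. Qed.

Lemma char_Jm (R : comNzRingType) k (a : nat -> R) m :
  char_poly (Jm k a m) = pm k a m.
Proof.
rewrite Jm_Cmx charC /pm big_split_ord /= big1 ?add0r; last first.
  by move=> i _; rewrite /= leqNgt ltn_ord scale0r.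
rewrite addnC; congr (_ - _); apply: eq_bigr => i _ /=.
rewrite leq_addr addKn; congr (_ *: 'X^_).
have := ltn_ord i; clear; lia.
Qed.

Lemma qm_rec (R : comNzRingType) k (a : nat -> R) m :
  qm k a m.+1 = 'X * qm k a m + (bcoef k a m 0)%:P.
Proof.
rewrite /qm big_ord_recr /=.
have -> : (m.+1 - m - 1 = 0)%N by clear; lia.
rewrite expr0 alg_polyC mulrDr -exprS addrA.
congr (_ + _ + _); rewrite mulr_sumr; apply: eq_bigr => i _.
rewrite -scalerAr -exprS; congr (_ *: 'X^_).
have := ltn_ord i; clear; lia.
Qed.

Lemma pm_rec (R : comNzRingType) k (a : nat -> R) m : (0 < k)%N ->
  pm k a m.+1 = 'X * pm k a m + bcoef k a m 0 *: pm k a 0.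
Proof.
case: k => [//|k] _.
set b := bcoef k.+1 a m 0.
have E1 : \sum_(j < k.+1) bcoef k.+1 a m.+1 j *: 'X^(k.+1 - j - 1) =
   b *: \sum_(j < k.+1) bcoef k.+1 a 0 j *: 'X^(k.+1 - j - 1) +
   \sum_(j < k.+1) bcoef k.+1 a m j.+1 *: 'X^(k - j).
  rewrite scaler_sumr -big_split /=; apply: eq_bigr => j _.
  rewrite /= ltn_ord scalerA scalerDl mulrC /b subn1 /=; congr (_ + _ *: 'X^_).
  by have := ltn_ord j; clear; lia.
have E2 : \sum_(j < k.+1) bcoef k.+1 a m j.+1 *: 'X^(k - j) =
   \sum_(j < k) bcoef k.+1 a m j.+1 *: 'X^(k - j).
  rewrite big_ord_recr /=.
  have -> : bcoef k.+1 a m k.+1 = 0 by case: m {b E1} => [|m] /=; rewrite ltnn.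
  by rewrite scale0r addr0.
have E3 : 'X * \sum_(j < k.+1) bcoef k.+1 a m j *: 'X^(k.+1 - j - 1) =
   b *: 'X^(k.+1) + \sum_(j < k) bcoef k.+1 a m j.+1 *: 'X^(k - j).
  rewrite mulr_sumr big_ord_recl /= subn0 subn1 /= -scalerAr -exprS; congr (_ + _).
  apply: eq_bigr => j _; rewrite -scalerAr -exprS; congr (_ *: 'X^_).
  by rewrite /bump /=; have := ltn_ord j; clear; lia.
rewrite /pm E1 E2 mulrBr E3 -exprS addn0 addnS.
rewrite -!mul_polyC.
ring.
Qed.

Lemma pm_qm (R : comNzRingType) k (a : nat -> R) m : (0 < k)%N ->
  pm k a m = pm k a 0 * qm k a m.
Proof.
move=> k0; elim: m => [|m IH].
  by rewrite /qm big_ord0 addr0 expr0 mulr1.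
rewrite pm_rec // qm_rec IH -mul_polyC; ring.
Qed.

Theorem mainTheorem5 (R : rcfType) (k : nat) (a : nat -> R) :
  (2 <= k)%N -> a 0%N != 0 ->
  forall m : nat,
    [/\ pm k a m = pm k a 0 * qm k a m,
        char_poly (Jm k a m) = pm k a m &
        forall z : R[i],
          eigenvalue (map_mx (fun x : R => x%:C%C) (Jm k a m)) z <->
          eigenvalue (map_mx (fun x : R => x%:C%C) (Jm k a 0)) z
          \/ root (map_poly (fun x : R => x%:C%C) (qm k a m)) z].
Proof.
move=> k2 _ m.
have k0 : (0 < k)%N by apply: leq_trans k2.
split; [exact: pm_qm | exact: char_Jm |] => z.
have E n : eigenvalue (map_mx (fun x : R => x%:C%C) (Jm k a n)) z =
           root (map_poly (real_complex R) (pm k a n)) z.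
  rewrite eigenvalue_root_char -char_Jm.
  by rewrite (map_char_poly (real_complex R)).
rewrite !E (pm_qm _ m k0) rmorphM /= rootM.
by split => /orP.
Qed.
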